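(* Let $T=2$, $d=1$. On a probability space $(\Omega,\mathcal F,\mathbb P)$ let $X,\varepsilon_1,\varepsilon_2$ be independent, with $X$ standard Gaussian, $\mathbb P(\varepsilon_1=-1/2)=\mathbb P(\varepsilon_1=4)=1/2$, $\mathbb P(\varepsilon_2=-1/2)=\mathbb P(\varepsilon_2=1/2)=1/2$. Let $\mathcal F_0$ be the $\sigma$-algebra of $\mathbb P$-null sets (and their complements), $\mathcal F_1=\mathcal F_0\vee\sigma(X,\varepsilon_1)$, $\mathcal F_2=\mathcal F_1\vee\sigma(\varepsilon_2)$. Let $\mathscr S=\{S^*,\tilde S,\bar S\}$ be real-valued adapted processes with increments $\Delta S^*_1=\varepsilon_1$, $\Delta S^*_2=\varepsilon_2$; $\Delta\tilde S_1=X$, $\Delta\tilde S_2=3-X$; $\Delta\bar S_1=3$, $\Delta\bar S_2=0$. Let $U(x)=\min\{\sqrt x,2\}$ for $x\ge0$ and $U(x)=-\infty$ for $x<0$, and $w_0=1$. Then $S^*\in\mathscr S^*$, and $$u(1):=\sup_{\phi\in\mathcal A(1)}\inf_{S\in\mathscr S}\mathbb E[U(W^S_2(1,\phi))]\le1<\tilde u(1):=\sup_{\phi\in\tilde{\mathcal A}(1)}\inf_{S\in\mathscr S}\mathbb E[U(W^S_2(1,\phi))],$$ where $\mathcal A(1)=\bigcap_{S\in\mathscr S}\{\phi:W^S_t(1,\phi)\ge0\text{ a.s. for }t=0,1,2\}$ and $\tilde{\mathcal A}(1)=\bigcap_{S\in\mathscr S}\{\phi:W^S_2(1,\phi)\ge0\text{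 a.s.}\}$.
   Context: Strategies are $\phi=(\phi_1,\phi_2)$ with $\phi_1$ $\mathcal F_0$-measurable (a.s. constant) real and $\phi_2$ an $\mathcal F_1$-measurable real random variable; $W^S_t(w,\phi)=w+\sum_{s=1}^t\phi_s\Delta S_s$. For a process $S$, $D_t^S(\omega)$ is the smallest affine subspace of $\mathbb R$ containing the support of the regular conditional distribution of $\Delta S_t$ given $\mathcal F_{t-1}$ at $\omega$. NA($S$): for every strategy $\phi$, $W_T^S(0,\phi)\ge0$ a.s. implies $W_T^S(0,\phi)=0$ a.s. $\mathscr S^*$ is the set of $S^*\in\mathscr S$ with NA($S^*$) and $D_t^S\subseteq D_t^{S^*}$ a.s. for all $S\in\mathscr S$ and $t\in\{1,2\}$. *)

(* Defs.v *)
From HB Require Import structures.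
From mathcomp Require Import all_boot all_order all_algebra.
From mathcomp Require Import all_classical all_reals all_analysis.
From mathcomp Require Import measurable_realfun normal_distribution.
Set Implicit Arguments. Unset Strict Implicit. Unset Printing Implicit Defensive.
Import Order.TTheory GRing.Theory Num.Theory.
Import numFieldNormedType.Exports.
Local Open Scope classical_set_scope.
Local Open Scope ring_scope.

Definition sigma_gen (T : Type) (G : set (set T)) : set (set T) := <<s G >>.

Definition preimages (T : Type) (d' : measure_display) (U : measurableType d')
  (f : T -> U) : set (set T) := [set f @^-1` B | B in measurable].

Definition measurable_wrt (T : Type) (d' : measure_display) (U : measurableType d')
  (G : set (set T)) (f : T -> U) : Prop :=
  forall B : set U, measurable B -> G (f @^-1` B).

Definition null_sigma (d : measure_display) (T : measurableType d) (R : realType)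
  (P : probability T R) : set (set T) :=
  [set A | measurable A /\ (P A = 0%E \/ P (~` A) = 0%E)].

Definition filt1 (d : measure_display) (T : measurableType d) (R : realType)
  (P : probability T R) (X e1 : T -> R) : set (set T) :=
  sigma_gen (null_sigma P `|` preimages X `|` preimages e1).

Definition filt2 (d : measure_display) (T : measurableType d) (R : realType)
  (P : probability T R) (X e1 e2 : T -> R) : set (set T) :=
  sigma_gen (filt1 P X e1 `|` preimages e2).

Definition indep3 (d : measure_display) (T : measurableType d) (R : realType)
  (P : probability T R) (X Y Z : T -> R) : Prop :=
  forall A B C : set R, measurable A -> measurable B -> measurable C ->
    P (X @^-1` A `&` Y @^-1` B `&` Z @^-1` C) =
    (P (X @^-1` A) * P (Y @^-1` B) * P (Z @^-1` C))%E.

(* A real process S = (S_0, S_1, S_2) is represented by its increments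
   (Delta S_1, Delta S_2); the wealth only depends on the increments. *)
Definition process (T : Type) (R : realType) := ((T -> R) * (T -> R))%type.

Definition strat (T : Type) (R : realType) := (R * (T -> R))%type.

Definition is_strategy (T : Type) (R : realType) (F1 : set (set T))
  (phi : strat T R) : Prop := measurable_wrt F1 phi.2.

Definition wealth (T : Type) (R : realType) (t : nat) (w : R) (phi : strat T R)
  (S : process T R) : T -> R :=
  fun om => w + (if (1 <= t)%N then phi.1 * S.1 om else 0)
              + (if (2 <= t)%N then phi.2 om * S.2 om else 0).

Definition NA (d : measure_display) (T : measurableType d) (R : realType)
  (P : probability T R) (F1 : set (set T)) (S : process T R) : Prop :=
  forall phi : strat T R, is_strategy F1 phi ->
    {ae P, forall om, 0 <= wealth 2 0 phi S om} ->
    {ae P, forall om, wealth 2 0 phi S om = 0}.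

Definition is_rcd (d : measure_display) (T : measurableType d) (R : realType)
  (P : probability T R) (G : set (set T)) (Y : T -> R)
  (kappa : T -> probability R R) : Prop :=
  (forall B : set R, measurable B -> measurable_wrt G (fun om => kappa om B : \bar R)) /\
  (forall (A : set T) (B : set R), G A -> measurable B ->
     (\int[P]_(om in A) kappa om B)%E = P (A `&` Y @^-1` B)).

Definition msupport (R : realType) (mu : set R -> \bar R) : set R :=
  [set x | forall e : R, 0 < e -> (0 < mu (ball x e))%E].

Definition affine_set (R : realType) (A : set R) : Prop :=
  forall x y l : R, A x -> A y -> A (l * x + (1 - l) * y).

Definition affine_hull (R : realType) (S : set R) : set R :=
  [set x | forall A, affine_set A -> S `<=` A -> A x].

Definition Dset (T : Type) (R : realType) (kappa : T -> probability R R) (om : T)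
  : set R := affine_hull (msupport (kappa om)).

(* D_t^S \subseteq D_t^{S'} a.s., for t in {1,2}, G_{t-1} the conditioning
   sigma-algebra and Y, Y' the increments Delta S_t, Delta S'_t *)
Definition D_incl (d : measure_display) (T : measurableType d) (R : realType)
  (P : probability T R) (G : set (set T)) (Y Y' : T -> R) : Prop :=
  forall kappa kappa' : T -> probability R R,
    is_rcd P G Y kappa -> is_rcd P G Y' kappa' ->
    {ae P, forall om, Dset kappa om `<=` Dset kappa' om}.

Definition in_Sstar (d : measure_display) (T : measurableType d) (R : realType)
  (P : probability T R) (F0 F1 : set (set T)) (SS : set (process T R))
  (Sst : process T R) : Prop :=
  SS Sst /\ NA P F1 Sst /\
  (forall S, SS S -> D_incl P F0 S.1 Sst.1 /\ D_incl P F1 S.2 Sst.2).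

Definition Uutil (R : realType) (x : R) : \bar R :=
  if 0 <= x then (Num.min (Num.sqrt x) 2)%:E else -oo%E.

Definition exp_util (d : measure_display) (T : measurableType d) (R : realType)
  (P : probability T R) (w : R) (phi : strat T R) (S : process T R) : \bar R :=
  (\int[P]_om Uutil (wealth 2 w phi S om))%E.

Definition adm (d : measure_display) (T : measurableType d) (R : realType)
  (P : probability T R) (F1 : set (set T)) (SS : set (process T R)) (w : R)
  : set (strat T R) :=
  [set phi | is_strategy F1 phi /\
     forall S, SS S -> forall t : nat, (t <= 2)%N ->
       {ae P, forall om, 0 <= wealth t w phi S om}].

Definition adm_tilde (d : measure_display) (T : measurableType d) (R : realType)
  (P : probability T R) (F1 : set (set T)) (SS : set (process T R)) (w : R)
  : set (strat T R) :=
  [set phi | is_strategy F1 phi /\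
     forall S, SS S -> {ae P, forall om, 0 <= wealth 2 w phi S om}].

Definition robust_value (d : measure_display) (T : measurableType d) (R : realType)
  (P : probability T R) (SS : set (process T R)) (w : R) (Adm : set (strat T R))
  : \bar R :=
  ereal_sup [set ereal_inf [set exp_util P w phi S | S in SS] | phi in Adm].

(* Main.v *)
Require Import Defs.
From HB Require Import structures.
From mathcomp Require Import all_boot all_order all_algebra.
From mathcomp Require Import all_classical all_reals all_analysis.
From mathcomp Require Import measurable_realfun normal_distribution.
From mathcomp Require Import ring lra.
Import Order.TTheory GRing.Theory Num.Theory.
Import numFieldNormedType.Exports.
Local Open Scope classical_set_scope.
Local Open Scope ring_scope.

Section Part_t3.
Local Open Scope ereal_scope.

Section sig.
Context (T : Type) (S : set (set T)) (hS : sigma_algebra setT S).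
Lemma sigT : S setT.
Proof. case: hS => h0 hC _; by rewrite -setC0 -setTD; apply: hC. Qed.
Lemma sigC A : S A -> S (~` A).
Proof. case: hS => _ hC _ hA; by rewrite -setTD; apply: hC. Qed.
Lemma sigU A B : S A -> S B -> S (A `|` B).
Proof.
case: hS => h0 _ hU hA hB; rewrite -bigcup2E; apply: hU => -[|[|n]] //=.
Qed.
Lemma sigI A B : S A -> S B -> S (A `&` B).
Proof.
move=> hA hB; rewrite -(setCK (A `&` B)) setCI; apply: sigC; apply: sigU; exact: sigC.
Qed.
End sig.

Section S.
Context (d : measure_display) (Om : measurableType d) (R : realType) (P : probability Om R).

Lemma finP (A : set Om) : measurable A -> P A = (fine (P A))%:E.
Proof. by move=> mA; rewrite fineK// fin_num_measure. Qed.

Lemma null_indep (A E : set Om) : null_sigma P A -> measurable E ->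
  P (A `&` E) = P A * P E.
Proof.
move=> [mA [PA|PA]] mE.
  rewrite PA mul0e; apply/eqP; rewrite -measure_le0 -PA.
  by apply: measureIl.
have PA1 : P A = 1 by rewrite -[A]setCK probability_setC ?PA ?sube0 //; exact: measurableC.
rewrite PA1 mul1e [in RHS](measureDI P mE mA) [in RHS]setIC.
rewrite -[LHS]add0e; congr (_ + _); apply: esym.
  apply/eqP; rewrite -measure_le0 -PA; apply: le_measure; rewrite ?inE.
  - exact: measurableD.
  - exact: measurableC.
  by move=> x [].
Qed.
End S.
#[global] Arguments null_indep {d Om R P A E}.
#[global] Arguments finP {d Om R} P {A}.

Section Main.
Context (d : measure_display) (Om : measurableType d) (R : realType)
  (P : probability Om R) (X e1 e2 : Om -> R)
  (mX : measurable_fun setT X) (me1 : measurable_fun setT e1)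
  (me2 : measurable_fun setT e2)
  (hind : indep3 P X e1 e2).

Lemma mpre (f : Om -> R) : measurable_fun setT f -> forall B, measurable B -> measurable (f @^-1` B).
Proof. by move=> mf B mB; rewrite -[_ @^-1` _]setTI; apply: mf. Qed.

Lemma PDI (A B : set Om) : measurable A -> measurable B -> P A = P (A `\` B) + P (A `&` B).
Proof. exact: measureDI. Qed.

Lemma Pbig (F : (set Om)^nat) : (forall n, measurable (F n)) -> trivIset setT F ->
  P (\bigcup_n F n) = \sum_(i <oo | i \in setT) P (F i).
Proof. by move=> mF tF; apply: measure_bigcup. Qed.

Lemma PU2 (A B : set Om) : measurable A -> measurable B -> P (A `|` B) <= P A + P B.
Proof. exact: measureU2. Qed.

Lemma PIl (A B : set Om) : measurable A -> measurable B -> P (A `&` B) <= P A.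
Proof. exact: measureIl. Qed.

Lemma PIr (A B : set Om) : measurable A -> measurable B -> P (A `&` B) <= P B.
Proof. exact: measureIr. Qed.

Lemma P_le0 (A : set Om) : P A <= 0 -> P A = 0.
Proof. by move=> h; apply/eqP; rewrite eq_le h measure_ge0. Qed.

Lemma F1_meas E : filt1 P X e1 E -> measurable E.
Proof.
apply: smallest_sub; first exact: sigma_algebra_measurable.
move=> A [[[mA _]|[B mB <-]]|[B mB <-]] //; exact: mpre.
Qed.

Lemma F1_sig : sigma_algebra setT (filt1 P X e1).
Proof. exact: smallest_sigma_algebra. Qed.

Lemma F1_indep (D : set R) (mD : measurable D) E : filt1 P X e1 E ->
  P (E `&` e2 @^-1` D) = P E * P (e2 @^-1` D).
Proof.
set Z := e2 @^-1` D.
have mZ : measurable Z by exact: mpre.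
pose Pi := [set E : set Om | exists A B C, [/\ null_sigma P A, measurable B,
   measurable C & E = A `&` X @^-1` B `&` e1 @^-1` C]].
pose H := [set E : set Om | measurable E /\ P (E `&` Z) = P E * P Z].
have nullI A A' : null_sigma P A -> null_sigma P A' -> null_sigma P (A `&` A').
  move=> [mA hA] [mA' hA']; split; first exact: measurableI.
  case: hA => hA.
    left; apply: P_le0; rewrite -hA; exact: PIl.
  case: hA' => hA'.
    left; apply: P_le0; rewrite -hA'; exact: PIr.
  right; rewrite setCI; apply: P_le0.
  apply: (le_trans (PU2 _ _ (measurableC mA) (measurableC mA'))).
  by rewrite hA hA' adde0.
have PiI : setI_closed Pi.
  move=> E1 E2 [A [B [C [nA mB mC ->]]]] [A' [B' [C' [nA' mB' mC' ->]]]].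
  exists (A `&` A'), (B `&` B'), (C `&` C'); split.
  - exact: nullI.
  - exact: measurableI.
  - exact: measurableI.
  - rewrite !preimage_setI; apply/seteqP; split => x /=; tauto.
have PiH : Pi `<=` H.
  move=> E0 [A [B [C [nA mB mC ->]]]].
  have mBC : measurable (X @^-1` B `&` e1 @^-1` C) by apply: measurableI; exact: mpre.
  have mBCZ : measurable (X @^-1` B `&` e1 @^-1` C `&` Z) by exact: measurableI.
  split.
    rewrite -setIA; apply: measurableI => //; by case: nA.
  have -> : A `&` X @^-1` B `&` e1 @^-1` C `&` Z = A `&` (X @^-1` B `&` e1 @^-1` C `&` Z) by rewrite !setIA.
  have -> : A `&` X @^-1` B `&` e1 @^-1` C = A `&` (X @^-1` B `&` e1 @^-1` C) by rewrite setIA.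
  rewrite (null_indep nA mBCZ) (null_indep nA mBC).
  rewrite -muleA; congr (_ * _).
  rewrite /Z hind //.
  have := hind _ _ _ mB mC (measurableT : measurable (@setT R)).
  by rewrite preimage_setT setIT probability_setT mule1 => ->.
have HL : lambda_system setT H.
  apply/dynkin_lambda_system; split.
  - by split => //; rewrite setTI probability_setT mul1e.
  - move=> E0 [mE hE]; split; first exact: measurableC.
    rewrite probability_setC //.
    have -> : ~` E0 `&` Z = Z `\` E0 by rewrite setDE setIC.
    have h := PDI _ _ mZ mE; rewrite (setIC Z E0) hE in h.
    move: h; rewrite (finP P mZ) (finP P mE) (finP P (measurableD mZ mE)).
    move: (fine (P Z)) (fine (P E0)) (fine (P (Z `\` E0))) => z a b.
    rewrite -EFinM -EFinD (_ : 1 - a%:E = (1 - a)%:E) // -EFinM => -[h].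
    congr (_%:E); rewrite mulrBl mul1r {1}h; ring.
  - move=> F tF hF; split.
      by apply: bigcup_measurable => k _; case: (hF k).
    rewrite setI_bigcupl Pbig; last first.
    + exact: trivIset_setIr.
    + by move=> n; apply: measurableI => //; case: (hF n).
    rewrite Pbig //; last by move=> n; case: (hF n).
    rewrite (finP P mZ) muleC -nneseriesZl; last by move=> i _; exact: measure_ge0.
    apply: eq_eseriesr => i _; case: (hF i) => _ ->.
    by rewrite (finP P mZ) muleC.
have := lambda_system_subset PiI HL PiH (fun _ _ _ _ => I).
move=> sub FE; suff : H E by case.
apply: sub; move: FE; apply: smallest_sub; first exact: smallest_sigma_algebra.
move=> A GA; apply: sub_sigma_algebra.
have nT : null_sigma P setT by split => //; right; rewrite setCT measure0.
case: GA => [[nA|[B mB <-]]|[C mC <-]].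
- exists A, setT, setT; split => //; by rewrite !preimage_setT !setIT.
- exists setT, B, setT; split => //; by rewrite !preimage_setT setIT setTI.
- exists setT, setT, C; split => //; by rewrite !preimage_setT !setTI.
Qed.
End Main.

End Part_t3.

Section Part_t4.
Local Open Scope ereal_scope.
#[global] Arguments mpre {d Om R f} _ {B} _.
#[global] Arguments P_le0 {d Om R P A}.
#[global] Arguments PU2 {d Om R P A B}.
#[global] Arguments PIl {d Om R P A B}.
#[global] Arguments PIr {d Om R P A B}.
#[global] Arguments PDI {d Om R P A B}.

Section D.
Context (d : measure_display) (Om : measurableType d) (R : realType) (P : probability Om R).

Lemma aeI (Q : Om -> Prop) :
  (exists N, measurable N /\ P N = 0%E /\ forall om, ~ N om -> Q om) ->
  {ae P, forall om, Q om}.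
Proof.
move=> [N [mN [PN H]]]; exists N; split => // om /= nQ.
by apply: contrapT => /H.
Qed.

Lemma aeE (Q : Om -> Prop) : {ae P, forall om, Q om} ->
  (exists N, measurable N /\ P N = 0%E /\ forall om, ~ N om -> Q om).
Proof.
move=> [N [mN [PN H]]]; exists N; split => //; split => // om nN.
by apply: contrapT => nQ; apply: nN; apply: H.
Qed.

Lemma affine_full (A : set R) (c1 c2 : R) : c1 != c2 -> A c1 -> A c2 ->
  affine_hull A = setT.
Proof.
move=> c12 h1 h2; apply/seteqP; split => // x _ B aB AB.
have -> : x = (((x - c2) / (c1 - c2)) * c1 + (1 - (x - c2) / (c1 - c2)) * c2)%R.
  have : (c1 - c2 != 0)%R by rewrite subr_eq0.
  move=> h; field.
  exact: h.
by apply: aB; apply: AB.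
Qed.

Lemma kappa_pos (G : set (set Om)) (Y : Om -> R) (mY : measurable_fun setT Y)
  (hG : forall Z, G Z -> measurable Z /\ forall B, measurable B ->
       P (Z `&` Y @^-1` B) = P Z * P (Y @^-1` B))
  (kappa : Om -> probability R R) (hk : is_rcd P G Y kappa) (c : R) :
  0 < P (Y @^-1` [set c]) ->
  {ae P, forall om, forall n : nat, 0 < kappa om (ball c (n.+1%:R^-1)%R)}.
Proof.
move=> pc; apply: ae_foralln => n.
set B := ball c (n.+1%:R^-1)%R.
have mB : measurable B by exact: measurable_ball.
case: hk => hm hint.
set Zs := (fun om => kappa om B) @^-1` [set 0].
have GZ : G Zs by apply: hm => //; exact: emeasurable_set1.
have [mZ indZ] := hG Zs GZ.
have h := hint Zs B GZ mB.
rewrite (eq_integral (fun _ => 0)) ?integral0 in h; last first.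
  by move=> om; rewrite inE.
rewrite indZ // in h.
have PB : 0 < P (Y @^-1` B).
  apply: (lt_le_trans pc); apply: le_measure; rewrite ?inE.
  - exact: (mpre mY (measurable_set1 c)).
  - exact: (mpre mY mB).
  - move=> om /= ->; rewrite /B; apply: ballxx; by rewrite invr_gt0 ltr0n.
have PZ : P Zs = 0.
  move: h PB; rewrite (finP P mZ) (finP P (mpre mY mB)) -EFinM lte_fin.
  move=> /esym/eqP; rewrite eqe mulf_eq0 => /orP[/eqP -> //|/eqP ->].
  by rewrite ltxx.
apply: aeI; exists Zs; split => //; split => // om nZ.
rewrite lt_def measure_ge0 andbT; apply/eqP => h0; apply: nZ.
by rewrite /Zs /= h0.
Qed.


Lemma msupportP (mu : probability R R) (c : R) :
  (forall n : nat, 0 < mu (ball c (n.+1%:R^-1)%R)) -> msupport mu c.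
Proof.
move=> h e e0; apply: (lt_le_trans (h (Num.truncn e^-1))).
apply: le_measure; rewrite ?inE; try exact: measurable_ball.
apply: le_ball; rewrite -[leRHS](invrK e) lef_pV2 ?posrE ?invr_gt0 ?ltr0n //.
exact/ltW/truncnS_gt.
Qed.

Lemma Dfull (G : set (set Om)) (Y : Om -> R) (mY : measurable_fun setT Y)
  (hG : forall Z, G Z -> measurable Z /\ forall B, measurable B ->
       P (Z `&` Y @^-1` B) = P Z * P (Y @^-1` B))
  (c1 c2 : R) : c1 != c2 -> 0 < P (Y @^-1` [set c1]) -> 0 < P (Y @^-1` [set c2]) ->
  forall Y', D_incl P G Y' Y.
Proof.
move=> c12 p1 p2 Y' kappa kappa' _ hk.
have [N1 [mN1 [PN1 H1]]] := aeE _ (@kappa_pos G Y mY hG kappa' hk c1 p1).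
have [N2 [mN2 [PN2 H2]]] := aeE _ (@kappa_pos G Y mY hG kappa' hk c2 p2).
apply: aeI; exists (N1 `|` N2); split; first exact: measurableU.
split.
  apply: P_le0; apply: le_trans (PU2 mN1 mN2) _.
  by rewrite PN1 PN2 adde0.
move=> om hN x _; rewrite /Dset (affine_full _ _ _ c12) //.
- apply: msupportP; apply: H1 => h; apply: hN; by left.
- apply: msupportP; apply: H2 => h; apply: hN; by right.
Qed.
End D.

End Part_t4.

Section Part_t5.
Local Open Scope ereal_scope.
#[global] Arguments mpre {d Om R f} _ {B} _.
#[global] Arguments P_le0 {d Om R P A}.
#[global] Arguments PU2 {d Om R P A B}.
#[global] Arguments PIl {d Om R P A B}.
#[global] Arguments PIr {d Om R P A B}.
#[global] Arguments PDI {d Om R P A B}.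
#[global] Arguments F1_meas {d Om R P X e1} mX me1 {E}.
#[global] Arguments F1_indep {d Om R P X e1 e2} mX me1 me2 hind {D} mD {E}.
#[global] Arguments F1_sig {d Om R} P X e1.
#[global] Arguments sigI {T S} hS {A B}.
#[global] Arguments null_indep {d Om R P A E}.
#[global] Arguments finP {d Om R} P {A}.

Lemma meas_gt (R : realType) (a : R) : measurable [set x : R | (a < x)%R].
Proof.
have -> : [set x : R | (a < x)%R] = `]a, +oo[%classic.
  by apply/seteqP; split => x /=; rewrite in_itv /= andbT.
exact: measurable_itv.
Qed.

Lemma meas_lt (R : realType) (a : R) : measurable [set x : R | (x < a)%R].
Proof.
have -> : [set x : R | (x < a)%R] = `]-oo, a[%classic.
  by apply/seteqP; split => x /=; rewrite in_itv /=.
exact: measurable_itv.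
Qed.

Section NAsec.
Context (d : measure_display) (Om : measurableType d) (R : realType)
  (P : probability Om R) (X e1 e2 : Om -> R)
  (mX : measurable_fun setT X) (me1 : measurable_fun setT e1)
  (me2 : measurable_fun setT e2)
  (hind : indep3 P X e1 e2).

Let F1 := filt1 P X e1.

Lemma fine_ge0P (A : set Om) : (0 <= fine (P A))%R.
Proof. by apply: fine_ge0; exact: measure_ge0. Qed.

Lemma nullF1 (C : set Om) (v : R) (N : set Om) : F1 C -> measurable N -> P N = 0 ->
  P (e2 @^-1` [set v]) = (1/2)%:E -> C `&` e2 @^-1` [set v] `<=` N -> P C = 0.
Proof.
move=> FC mN PN pv CN.
have mC := F1_meas mX me1 FC.
have h := F1_indep mX me1 me2 hind (measurable_set1 v) FC.
have : P (C `&` e2 @^-1` [set v]) <= 0.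
  rewrite -PN; apply: le_measure; rewrite ?inE //.
  apply: measurableI => //; exact: (mpre me2 (measurable_set1 v)).
rewrite h pv (finP P mC) -EFinM lee_fin => h2.
have := fine_ge0P C; move: h2; move: (fine (P C)) => x h2 h3.
by congr (_%:E); lra.
Qed.

Lemma F1_e1 (B : set R) : measurable B -> F1 (e1 @^-1` B).
Proof. by move=> mB; apply: sub_sigma_algebra; right; exists B. Qed.

Lemma NA_c (phi : strat Om R) (hphi : is_strategy F1 phi) (N : set Om)
  (mN : measurable N) (PN : P N = 0)
  (hN : forall om, ~ N om -> (0 <= phi.1 * e1 om + phi.2 om * e2 om)%R)
  (he2a : P (e2 @^-1` [set (- (1/2))%R : R]) = (1/2)%:E)
  (he2b : P (e2 @^-1` [set (1/2)%R : R]) = (1/2)%:E)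
  (c : R) (pc : 0 < P (e1 @^-1` [set c])) :
  (0 <= c * phi.1)%R /\ exists M, measurable M /\ P M = 0 /\
    forall om, ~ M om -> e1 om = c -> (`|phi.2 om| <= 2 * c * phi.1)%R.
Proof.
set Cp := phi.2 @^-1` [set x | (2 * c * phi.1 < x)%R] `&` e1 @^-1` [set c].
set Cm := phi.2 @^-1` [set x | (x < - (2 * c * phi.1))%R] `&` e1 @^-1` [set c].
have FCp : F1 Cp.
  apply: (sigI (F1_sig _ _ _)); [apply: hphi; exact: meas_gt| apply: F1_e1; exact: measurable_set1].
have FCm : F1 Cm.
  apply: (sigI (F1_sig _ _ _)); [apply: hphi; exact: meas_lt| apply: F1_e1; exact: measurable_set1].
have PCp : P Cp = 0.
  apply: (@nullF1 _ _ _ FCp mN PN he2a) => om [[/= h1 h2] h3].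
  apply: contrapT => /hN; rewrite h2 h3 leNgt => /negP; apply.
  by rewrite -subr_gt0 -[ltRHS]opprK ltrNr; lra.
have PCm : P Cm = 0.
  apply: (@nullF1 _ _ _ FCm mN PN he2b) => om [[/= h1 h2] h3].
  apply: contrapT => /hN; rewrite h2 h3 leNgt => /negP; apply.
  lra.
have mCp := F1_meas mX me1 FCp.
have mCm := F1_meas mX me1 FCm.
have nCpm : P (Cp `|` Cm) = 0.
  apply: P_le0; apply: le_trans (PU2 mCp mCm) _; by rewrite PCp PCm adde0.
split.
  rewrite leNgt; apply/negP => neg.
  suff : P (e1 @^-1` [set c]) <= 0 by rewrite leNgt pc.
  rewrite -nCpm; apply: le_measure; rewrite ?inE.
  - exact: (mpre me1 (measurable_set1 c)).
  - exact: measurableU.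
  move=> om /= e1c; case: (ltrP (2 * c * phi.1)%R (phi.2 om)) => h.
    by left.
  right; split => //=; lra.
exists (Cp `|` Cm); split; first exact: measurableU.
split => // om nC e1c.
have nCp : ~ Cp om by move=> h; apply: nC; left.
have nCm : ~ Cm om by move=> h; apply: nC; right.
rewrite ler_norml; apply/andP; split.
  rewrite lerNl; rewrite leNgt; apply/negP => h; apply: nCm; split => //=; lra.
rewrite leNgt; apply/negP => h; by apply: nCp.
Qed.


Lemma PU (A B : set Om) : measurable A -> measurable B -> A `&` B = set0 ->
  P (A `|` B) = P A + P B.
Proof. by move=> mA mB AB; rewrite measureU. Qed.

Lemma two_pts (Y : Om -> R) (mY : measurable_fun setT Y) (a b : R) : a != b ->
  P (Y @^-1` [set a]) = (1/2)%:E -> P (Y @^-1` [set b]) = (1/2)%:E ->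
  P (~` (Y @^-1` [set a] `|` Y @^-1` [set b])) = 0.
Proof.
move=> ab pa pb.
have ma := mpre mY (measurable_set1 a).
have mb := mpre mY (measurable_set1 b).
rewrite probability_setC; last exact: measurableU.
rewrite PU //; last first.
  apply/seteqP; split => // om [/= -> h]; by move: ab; rewrite h eqxx.
rewrite pa pb -EFinD (_ : (1/2 + 1/2 = 1)%R); last by field.
by rewrite subrr.
Qed.

Lemma NA_Sst
  (he1a : P (e1 @^-1` [set (- (1/2))%R : R]) = (1/2)%:E)
  (he1b : P (e1 @^-1` [set 4%R : R]) = (1/2)%:E)
  (he2a : P (e2 @^-1` [set (- (1/2))%R : R]) = (1/2)%:E)
  (he2b : P (e2 @^-1` [set (1/2)%R : R]) = (1/2)%:E) :
  NA P F1 (e1, e2).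
Proof.
move=> phi hphi /aeE [N [mN [PN hN]]].
have hN' : forall om, ~ N om -> (0 <= phi.1 * e1 om + phi.2 om * e2 om)%R.
  by move=> om /hN; rewrite /wealth /= add0r.
have half : 0 < (1/2 : R)%:E by rewrite lte_fin; lra.
have [h1 [M1 [mM1 [PM1 HM1]]]] := @NA_c phi hphi N mN PN hN' he2a he2b (- (1/2))%R ltac:(by rewrite he1a).
have [h2 [M2 [mM2 [PM2 HM2]]]] := @NA_c phi hphi N mN PN hN' he2a he2b 4%R ltac:(by rewrite he1b).
have phi0 : phi.1 = 0%R by lra.
have n4 : (- (1/2))%R != (4%R : R) by apply/eqP; lra.
have Pr := @two_pts e1 me1 _ _ n4 he1a he1b.
have mr : measurable (~` (e1 @^-1` [set (- (1/2))%R] `|` e1 @^-1` [set 4%R])).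
  apply: measurableC; apply: measurableU; exact: (mpre me1 (measurable_set1 _)).
apply: aeI; exists (M1 `|` M2 `|` ~` (e1 @^-1` [set (- (1/2))%R] `|` e1 @^-1` [set 4%R])).
split; first by apply: measurableU => //; exact: measurableU.
split.
  apply: P_le0; apply: le_trans (PU2 (measurableU _ _ mM1 mM2) mr) _.
  rewrite Pr adde0; apply: le_trans (PU2 mM1 mM2) _; by rewrite PM1 PM2 adde0.
move=> om hom; rewrite /wealth /= phi0 mul0r !add0r.
have nM1 : ~ M1 om by move=> h; apply: hom; left; left.
have nM2 : ~ M2 om by move=> h; apply: hom; left; right.
have : e1 om = (- (1/2))%R \/ e1 om = 4%R.
  apply: contrapT => h; apply: hom; right => -[] /=; tauto.
case=> he.
  have := HM1 om nM1 he; rewrite phi0 mulr0 normr_le0 => /eqP ->; by rewrite mul0r.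
have := HM2 om nM2 he; rewrite phi0 mulr0 normr_le0 => /eqP ->; by rewrite mul0r.
Qed.
End NAsec.

End Part_t5.

Section Part_t6.
Local Open Scope ereal_scope.

Lemma normal_pos (R : realType) (a : R) : 0 < normal_prob 0 1 `[a, (a + 1)%R]%classic.
Proof.
set V := `[a, (a + 1)%R]%classic.
have mV : measurable V by exact: measurable_itv.
set M := ((`|a| + 1) ^+ 2)%R.
set k := (normal_peak (1 : R) * expR (- M / 2))%R.
have k0 : (0 < k)%R by rewrite mulr_gt0 ?expR_gt0 // normal_peak_gt0 // oner_neq0.
apply: (@lt_le_trans _ _ (\int[lebesgue_measure]_(x in V) (cst k%:E) x)).
  rewrite integral_cst //; set L := (X in _ * X).
  have -> : L = 1%:E.
    have := @lebesgue_measure_itv R `[a, (a+1)%R].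
    rewrite /= lte_fin ltrDl ltr01 -EFinD addrAC subrr add0r => h; exact: h.
  by rewrite mule1 lte_fin.
apply: ge0_le_integral => //.
- by move=> x _; rewrite lee_fin ltW.
- apply/measurable_EFinP; apply: measurable_funTS; exact: measurable_normal_pdf.
move=> x; rewrite /V /= in_itv /= => /andP[h1 h2].
rewrite lee_fin normal_pdfE ?oner_neq0 //.
rewrite /k ler_wpM2l ?normal_peak_ge0 // /normal_fun ler_expR subr0 expr1n.
have ha1 : (a <= `|a|)%R by exact: ler_norm.
have ha2 : (- `|a| <= a)%R by rewrite lerNl; rewrite -normrN; exact: ler_norm.
have hx : (x ^+ 2 <= M)%R by rewrite /M; nra.
rewrite !mulNr lerN2 ler_pM2r ?invr_gt0 //; nra.
Qed.

End Part_t6.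

Section Part_t7.
Local Open Scope ereal_scope.

Lemma measurable_Uutil (R : realType) : measurable_fun setT (@Uutil R).
Proof.
rewrite /Uutil; apply: measurable_fun_ifT.
- apply: measurable_fun_ler; [exact: measurable_cst|exact: measurable_id].
- apply/measurable_EFinP; apply: measurable_minr; last exact: measurable_cst.
  exact: continuous_measurable_fun (@sqrt_continuous R).
- exact: measurable_cst.
Qed.

Lemma Uutil1 (R : realType) : @Uutil R 1%R = 1.
Proof.
rewrite /Uutil ler01 sqrtr1 (_ : Num.min (1:R) 2 = 1)%R //.
by apply: min_l; rewrite ler1n.
Qed.

Lemma sqrt_ge2 (R : realType) (x : R) : (4 <= x)%R -> (2 <= Num.sqrt x)%R.
Proof.
move=> h; have -> : (2 : R)%R = Num.sqrt (2 ^+ 2) by rewrite sqrtr_sqr ger0_norm.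
rewrite ler_sqrt; lra.
Qed.

Lemma Uutil_ge4 (R : realType) (x : R) : (4 <= x)%R -> @Uutil R x = 2%:E.
Proof.
move=> h; rewrite /Uutil ifT; last by lra.
by congr (_%:E); apply: min_r; exact: sqrt_ge2.
Qed.

End Part_t7.

Section Part_t8.
Local Open Scope ereal_scope.
#[global] Arguments mpre {d Om R f} _ {B} _.
#[global] Arguments P_le0 {d Om R P A}.
#[global] Arguments PU2 {d Om R P A B}.
#[global] Arguments finP {d Om R} P {A}.
#[global] Arguments two_pts {d Om R P Y} mY {a b}.
#[global] Arguments PU {d Om R P A B}.

Section U.
Context (d : measure_display) (Om : measurableType d) (R : realType)
  (P : probability Om R) (e1 e2 : Om -> R)
  (me1 : measurable_fun setT e1) (me2 : measurable_fun setT e2)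
  (hind12 : forall A B, measurable A -> measurable B ->
     P (e1 @^-1` A `&` e2 @^-1` B) = P (e1 @^-1` A) * P (e2 @^-1` B))
  (he1a : P (e1 @^-1` [set (- (1/2))%R : R]) = (1/2)%:E)
  (he1b : P (e1 @^-1` [set 4%R : R]) = (1/2)%:E)
  (he2a : P (e2 @^-1` [set (- (1/2))%R : R]) = (1/2)%:E)
  (he2b : P (e2 @^-1` [set (1/2)%R : R]) = (1/2)%:E).

Let W om := (1 + 1 * e1 om + 1 * e2 om)%R.
Let h om := (Num.min (Num.sqrt (W om)) 2)%:E.

Lemma mW : measurable_fun setT W.
Proof.
apply: measurable_funD; first apply: measurable_funD.
- exact: measurable_cst.
- by apply: measurable_funM => //; exact: measurable_cst.
- by apply: measurable_funM => //; exact: measurable_cst.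
Qed.

Lemma mh : measurable_fun setT h.
Proof.
apply/measurable_EFinP.
apply: (measurableT_comp (f := (fun x : R => Num.sqrt x) \min (cst 2%R))); last exact: mW.
apply: measurable_minr; last exact: measurable_cst.
exact: continuous_measurable_fun (@sqrt_continuous R).
Qed.

Lemma h_ge0 om : 0 <= h om.
Proof. by rewrite /h lee_fin le_min sqrtr_ge0 ler0n. Qed.

Lemma Pint_cst (D : set Om) (r : \bar R) : measurable D ->
  \int[P]_(x in D) (cst r) x = r * P D.
Proof. by move=> mD; rewrite integral_cst. Qed.

Lemma util_Sst : (5/4)%:E <= \int[P]_om Uutil (W om).
Proof.
have m1 v : measurable (e1 @^-1` [set v]) by exact: (mpre me1 (measurable_set1 v)).
have m2 v : measurable (e2 @^-1` [set v]) by exact: (mpre me2 (measurable_set1 v)).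
have n1 : (- (1/2))%R != (4 : R)%R by apply/eqP; lra.
have n2 : (- (1/2))%R != (1/2 : R)%R by apply/eqP; lra.
have N1 := two_pts me1 n1 he1a he1b.
have N2 := two_pts me2 n2 he2a he2b.
set U1 := e1 @^-1` [set (- (1/2))%R] `|` e1 @^-1` [set 4%R].
set U2 := e2 @^-1` [set (- (1/2))%R] `|` e2 @^-1` [set (1/2)%R].
have mU1 : measurable U1 by apply: measurableU.
have mU2 : measurable U2 by apply: measurableU.
have -> : \int[P]_om Uutil (W om) = \int[P]_om h om.
  apply: ae_eq_integral => //.
  - exact: measurableT_comp (measurable_Uutil R) mW.
  - exact: mh.
  apply: aeI; exists (~` U1 `|` ~` U2); split.
    by apply: measurableU; exact: measurableC.
  split.
    apply: P_le0; apply: le_trans (PU2 (measurableC mU1) (measurableC mU2)) _.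
    by rewrite N1 N2 adde0.
  move=> om hom _.
  have hU1 : U1 om by apply: contrapT => h0; apply: hom; left.
  have hU2 : U2 om by apply: contrapT => h0; apply: hom; right.
  rewrite /Uutil /h ifT //; rewrite /W.
  case: hU1 => /= ->; case: hU2 => /= ->; lra.
set A := e1 @^-1` [set 4%R] `&` e2 @^-1` ([set (- (1/2))%R] `|` [set (1/2)%R]).
set B := e1 @^-1` [set (- (1/2))%R] `&` e2 @^-1` [set (1/2)%R].
have mA : measurable A.
  apply: measurableI => //; apply: (mpre me2); apply: measurableU; exact: measurable_set1.
have mB : measurable B by apply: measurableI.
have PA : P A = (1/2)%:E.
  rewrite /A hind12; last 2 first.
  - exact: measurable_set1.
  - by apply: measurableU; exact: measurable_set1.
  rewrite preimage_setU PU // ?he2a ?he2b ?he1b.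
    by rewrite -EFinD -EFinM; congr (_%:E); field.
  apply/seteqP; split => // om [/= -> h0]; by move: n2; rewrite h0 eqxx.
have PB : P B = (1/4)%:E.
  rewrite /B hind12; try exact: measurable_set1.
  by rewrite he1a he2b -EFinM; congr (_%:E); field.
have AB : [disjoint A & B].
  rewrite /disj_set; apply/eqP/seteqP; split => // om [[/= h1 _] [/= h2 _]].
  by move: n1; rewrite -h2 -h1 eqxx.
apply: (@le_trans _ _ (\int[P]_(om in A `|` B) h om)); last first.
  apply: ge0_subset_integral => //; [exact: measurableU| exact: mh| by move=> *; exact: h_ge0].
rewrite ge0_integral_setU //; last 2 first.
- exact: measurable_funS mh.
- by move=> *; exact: h_ge0.
apply: (@le_trans _ _ (\int[P]_(om in A) (cst 2%:E) om + \int[P]_(om in B) (cst 1) om)).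
  rewrite !Pint_cst // PA PB -!EFinM -EFinD lee_fin; lra.
apply: leeD; apply: ge0_le_integral => //.
- by move=> *; rewrite lee_fin.
- exact: measurable_funS mh.
- move=> om [/= h1 [/= h2|/= h2]]; rewrite /h /W h1 h2 lee_fin le_min lexx andbT; apply: sqrt_ge2; lra.
- exact: measurable_funS mh.
- move=> om [/= h1 h2]; rewrite /h /W h1 h2 lee_fin le_min.
  rewrite (_ : (1 + 1 * - (1/2) + 1 * (1/2))%R = 1%R); last lra.
  by rewrite sqrtr1 lexx ler1n.
Qed.
End U.

End Part_t8.
#[global] Arguments F1_meas {d Om R P X e1} mX me1 {E}.
#[global] Arguments F1_indep {d Om R P X e1 e2} mX me1 me2 hind {D} mD {E}.
#[global] Arguments null_indep {d Om R P A E}.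
#[global] Arguments mpre {d Om R f} _ {B} _.
#[global] Arguments P_le0 {d Om R P A}.
#[global] Arguments PU2 {d Om R P A B}.
#[global] Arguments finP {d Om R} P {A}.
#[global] Arguments two_pts {d Om R P Y} mY {a b}.
#[global] Arguments PU {d Om R P A B}.
#[global] Arguments aeI {d Om R P Q}.
#[global] Arguments aeE {d Om R P Q}.
#[global] Arguments Pint_cst {d Om R P D} r.

Lemma phi1_zero d (Om : measurableType d) (R : realType) (P : probability Om R)
  (X : Om -> R) (mX : measurable_fun setT X)
  (hX : forall A : set R, measurable A -> P (X @^-1` A) = normal_prob 0 1 A)
  (a : R) (N : set Om) : measurable N -> P N = 0%E ->
  (forall om, ~ N om -> 0 <= 1 + a * X om) -> a = 0.
Proof.
move=> mN PN hN.
have key (b : R) : X @^-1` `[b, b + 1]%classic `<=` N -> False.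
  move=> sub.
  have := normal_pos _ b; rewrite -hX; last exact: measurable_itv.
  have : (P (X @^-1` `[b, (b + 1)%R]%classic) <= 0)%E.
    rewrite -PN; apply: le_measure; rewrite ?inE //.
    exact: (mpre mX (measurable_itv _)).
  by move=> h1 h2; have := lt_le_trans h2 h1; rewrite ltxx.
have [a0|a0|//] := ltgtP a 0.
- exfalso; apply: (key (- a^-1 + 1)) => om /= hom.
  apply: contrapT => /hN; rewrite in_itv /= in hom; case/andP: hom => h1 h2.
  have ai : a * a^-1 = 1 by rewrite mulfV // lt_eqF.
  rewrite leNgt => /negP; apply; nra.
- exfalso; apply: (key (- a^-1 - 2)) => om /= hom.
  apply: contrapT => /hN; rewrite in_itv /= in hom; case/andP: hom => h1 h2.
  have ai : a * a^-1 = 1 by rewrite mulfV // gt_eqF.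
  rewrite leNgt => /negP; apply; nra.
Qed.

Theorem mainTheorem8 (d : measure_display) (Om : measurableType d) (R : realType)
  (P : probability Om R) (X e1 e2 : Om -> R)
  (mX : measurable_fun setT X) (me1 : measurable_fun setT e1)
  (me2 : measurable_fun setT e2)
  (hind : indep3 P X e1 e2)
  (hX : forall A : set R, measurable A -> P (X @^-1` A) = normal_prob 0 1 A)
  (he1a : P (e1 @^-1` [set (- (1/2)) : R]) = (1/2)%:E)
  (he1b : P (e1 @^-1` [set (4 : R)]) = (1/2)%:E)
  (he2a : P (e2 @^-1` [set (- (1/2)) : R]) = (1/2)%:E)
  (he2b : P (e2 @^-1` [set (1/2 : R)]) = (1/2)%:E) :
  let F0 := null_sigma P in
  let F1 := filt1 P X e1 in
  let Sst : process Om R := (e1, e2) in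
  let Stl : process Om R := (X, fun om => 3 - X om) in
  let Sbr : process Om R := (fun _ => 3, fun _ => 0) in
  let SS : set (process Om R) := [set Sst; Stl; Sbr] in
  in_Sstar P F0 F1 SS Sst /\
  (robust_value P SS 1 (adm P F1 SS 1) <= 1%:E)%E /\
  (1%:E < robust_value P SS 1 (adm_tilde P F1 SS 1))%E.
Proof.
move=> F0 F1 Sst Stl Sbr SS.
have hind12 : forall A B, measurable A -> measurable B ->
    P (e1 @^-1` A `&` e2 @^-1` B) = (P (e1 @^-1` A) * P (e2 @^-1` B))%E.
  move=> A B mA mB; have := hind _ _ _ measurableT mA mB.
  by rewrite preimage_setT setTI probability_setT mul1e.
have SSst : SS Sst by rewrite /SS /=; tauto.
have SStl : SS Stl by rewrite /SS /=; tauto.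
have SSbr : SS Sbr by rewrite /SS /=; tauto.
have half : (0 < (1/2 : R)%:E)%E by rewrite lte_fin; lra.
split.
  split => //; split.
    exact: (@NA_Sst d Om R P X e1 e2 mX me1 me2 hind he1a he1b he2a he2b).
  move=> S _; split.
  - apply: (@Dfull d Om R P F0 e1 me1 _ (- (1/2)) 4).
    + move=> Z hZ; split; first by case: hZ.
      by move=> B mB; apply: null_indep => //; exact: (mpre me1 mB).
    + by apply/eqP; lra.
    + by rewrite he1a.
    + by rewrite he1b.
  - apply: (@Dfull d Om R P F1 e2 me2 _ (- (1/2)) (1/2)).
    + move=> Z hZ; split; first exact: (F1_meas mX me1 hZ).
      by move=> B mB; apply: (F1_indep mX me1 me2 hind mB hZ).
    + by apply/eqP; lra.
    + by rewrite he2a.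
    + by rewrite he2b.
split.
  rewrite /robust_value; apply: ge_ereal_sup => _ [phi [hphi hS] <-].
  have := hS Stl SStl 1%N isT; move/aeE => [N [mN [PN hN]]].
  have phi0 : phi.1 = 0.
    apply: (@phi1_zero d Om R P X mX hX phi.1 N mN PN) => om h.
    by have := hN om h; rewrite /wealth /= addr0.
  apply: (@le_trans _ _ (exp_util P 1 phi Sbr)).
    by apply: ereal_inf_lbound; exists Sbr.
  rewrite /exp_util (eq_integral (cst 1%E)); last first.
    by move=> om _; rewrite /wealth /= phi0 mul0r addr0 mulr0 addr0 Uutil1.
  by rewrite Pint_cst // probability_setT mule1.
pose phs : strat Om R := (1%R, fun _ => 1%R).
have hphs : is_strategy F1 phs.
  move=> B mB; have [h|h] := pselect (B 1%R).
    have -> : (fun _ : Om => 1%R) @^-1` B = setT by apply/seteqP; split.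
    exact: (@sigT _ _ (@F1_sig d Om R P X e1)).
  have -> : (fun _ : Om => 1%R) @^-1` B = set0 by apply/seteqP; split.
  exact: sigma_algebra0.
have n1 : (- (1/2))%R != (4 : R)%R by apply/eqP; lra.
have n2 : (- (1/2))%R != (1/2 : R)%R by apply/eqP; lra.
have N1 := two_pts me1 n1 he1a he1b.
have N2 := two_pts me2 n2 he2a he2b.
have m1 v : measurable (e1 @^-1` [set v]) by exact: (mpre me1 (measurable_set1 v)).
have m2 v : measurable (e2 @^-1` [set v]) by exact: (mpre me2 (measurable_set1 v)).
set U1 := e1 @^-1` [set (- (1/2))%R] `|` e1 @^-1` [set 4%R].
set U2 := e2 @^-1` [set (- (1/2))%R] `|` e2 @^-1` [set (1/2)%R].
have mU1 : measurable U1 by apply: measurableU.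
have mU2 : measurable U2 by apply: measurableU.
have Wae : {ae P, forall om, 0 <= wealth 2 1 phs Sst om}.
  apply: aeI; exists (~` U1 `|` ~` U2); split.
    by apply: measurableU; exact: measurableC.
  split.
    apply: P_le0; apply: le_trans (PU2 (measurableC mU1) (measurableC mU2)) _.
    by rewrite N1 N2 adde0.
  move=> om hom.
  have hU1 : U1 om by apply: contrapT => h0; apply: hom; left.
  have hU2 : U2 om by apply: contrapT => h0; apply: hom; right.
  rewrite /wealth /=.
  case: hU1 => /= ->; case: hU2 => /= ->; lra.
have cases S : SS S -> S = Sst \/ S = Stl \/ S = Sbr by rewrite /SS /=; tauto.
have adm_phs : adm_tilde P F1 SS 1 phs.
  split => // S /cases [->|[->|->]] //.
  - apply: aeI; exists set0; split => //; split => // om _; rewrite /wealth /=; lra.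
  - apply: aeI; exists set0; split => //; split => // om _; rewrite /wealth /=; lra.
have PT2 : (\int[P]_om (cst (2%:E : \bar R)) om = 2%:E)%E.
  by rewrite Pint_cst // probability_setT mule1.
rewrite /robust_value; apply: (@lt_le_trans _ _ (5/4 : R)%:E).
  rewrite lte_fin; lra.
apply: le_ereal_sup_tmp; exists (ereal_inf [set exp_util P 1 phs S | S in SS]).
  by exists phs.
apply: le_ereal_inf_tmp => _ [S /cases [->|[->|->]] <-].
- exact: (@util_Sst d Om R P e1 e2 me1 me2 hind12 he1a he1b he2a he2b).
- rewrite /exp_util (eq_integral (cst 2%:E)) ?PT2 ?lee_fin; first lra.
  by move=> om _; rewrite /wealth /= Uutil_ge4 //; lra.
- rewrite /exp_util (eq_integral (cst 2%:E)) ?PT2 ?lee_fin; first lra.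
  by move=> om _; rewrite /wealth /= Uutil_ge4 //; lra.
Qed.
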